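(* Let $X$ be a metric space and $1\le p\le q<\infty$. Then for every $S>0$, $\epsilon_{X;p}(S)\le \frac{q}{p}\,\epsilon_{X;q}(S)$.
   Context: For a metric space $(X,d)$ and $1\le p<\infty$, $\ell^p(X)$ is the space of $p$-summable real functions on $X$ and $\ell^p_1(X)$ its unit sphere. For a map $\xi\colon X\to\ell^p(X)$, written $x\mapsto\xi_x$, put $S(\xi)=\sup\{d(x,y):\xi_x(y)\neq0\}$ and $\varepsilon(\xi;p)=\sup_{x\ne y}\|\xi_x-\xi_y\|_p/d(x,y)$. The profile is $\epsilon_{X;p}(S)=\inf\{\varepsilon(\xi;p):\xi\colon X\to\ell^p_1(X),\ S(\xi)\le S\}$. *)

(* Defs.v *)
From HB Require Import structures.
From mathcomp Require Import all_boot all_order all_algebra.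
From mathcomp Require Import all_classical all_reals all_analysis.
Set Implicit Arguments. Unset Strict Implicit. Unset Printing Implicit Defensive.
Import Order.TTheory GRing.Theory Num.Theory.
Local Open Scope classical_set_scope.
Local Open Scope ring_scope.

Definition is_metric (R : realType) (X : Type) (d : X -> X -> R) : Prop :=
  [/\ forall x y, 0 <= d x y,
      forall x y, d x y = 0 <-> x = y,
      forall x y, d x y = d y x &
      forall x y z, d x z <= d x y + d y z].

Definition lpsum (R : realType) (X : choiceType) (p : R) (f : X -> R) : \bar R :=
  \esum_(y in [set: X]) ((`|f y| `^ p)%:E).

Definition in_lp (R : realType) (X : choiceType) (p : R) (f : X -> R) : Prop :=
  (lpsum p f < +oo)%E.

Definition lpnorm (R : realType) (X : choiceType) (p : R) (f : X -> R) : \bar R :=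
  ((lpsum p f) `^ (p^-1))%E.

Definition in_lp_sphere (R : realType) (X : choiceType) (p : R) (f : X -> R) : Prop :=
  in_lp p f /\ lpnorm p f = 1%E.

Definition support_radius (R : realType) (X : choiceType) (d : X -> X -> R)
  (xi : X -> X -> R) : \bar R :=
  ereal_sup [set r | exists x y, xi x y != 0 /\ r = (d x y)%:E].

(* eps(xi;p) = sup_{x <> y} ||xi_x - xi_y||_p / d(x,y)
   (0 is added to the set so that the sup of the nonnegative ratios is 0 when X has <2 points) *)
Definition eps_xi (R : realType) (X : choiceType) (d : X -> X -> R) (p : R)
  (xi : X -> X -> R) : \bar R :=
  ereal_sup ([set 0%E] `|`
    [set r | exists x y, x != y /\
       r = (lpnorm p (fun z => (xi x z - xi y z)%R) * ((d x y)^-1)%:E)%E]).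

Definition profile (R : realType) (X : choiceType) (d : X -> X -> R) (p S : R) : \bar R :=
  ereal_inf [set eps_xi d p xi | xi in
    [set xi : X -> X -> R | (forall x, in_lp_sphere p (xi x)) /\
                            (support_radius d xi <= S%:E)%E]].

(* Main.v *)
Require Import Defs.
From HB Require Import structures.
From mathcomp Require Import all_boot all_order all_algebra.
From mathcomp Require Import all_classical all_reals all_analysis.
From mathcomp Require Import ring lra.
Import Order.TTheory GRing.Theory Num.Theory.
Import numFieldNormedType.Exports.
Local Open Scope classical_set_scope.
Local Open Scope ring_scope.

Section S.
Context {R : realType}.

Lemma mvt_powR (k a b : R) : 0 < a -> a <= b ->
  exists2 c, a <= c <= b & b `^ k - a `^ k = k * c `^ (k - 1) * (b - a).
Proof.
move=> a0 ab.
have D : forall x : R, x \in `]a, b[ -> is_derive x 1 (@powR R ^~ k) (k * x `^ (k - 1)).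
  move=> x; rewrite in_itv/= => /andP[ax _]; apply: is_derive1_powR; lra.
have H : {in `[a, b], forall x : R, derivable (@powR R ^~ k) x 1}.
  move=> x; rewrite in_itv/= => /andP[ax _].
  have x0 : 0 < x by lra.
  by have := @is_derive1_powR R k x x0; case.
have [c] := MVT_segment ab D (derivable_within_continuous H).
rewrite in_itv/= => cab ->; by exists c.
Qed.

Lemma bern_le (k x : R) : 0 <= k <= 1 -> 0 <= x -> x `^ k <= 1 + k * (x - 1).
Proof.
move=> /andP[k0 k1]; rewrite le_eqVlt => /predU1P[<-|x0].
  have [->|kn0] := eqVneq k 0; first by rewrite powRr0; lra.
  rewrite powR0 //; lra.
have [x1|x1] := leP x 1.
  have [c /andP[xc c1] E] := mvt_powR k x 1 x0 x1.
  have c0 : 0 < c by lra.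
  have : 1 <= c `^ (k - 1).
    rewrite -[X in X <= _](powRr0 c); apply: ger_powR; [apply/andP; split; lra | lra].
  move: E; rewrite powR1 => E ck.
  have : k * (1 - x) <= k * c `^ (k - 1) * (1 - x).
    rewrite -mulrA; apply: ler_wpM2l; first lra.
    rewrite -[X in X <= _](mul1r (1 - x)); apply: ler_wpM2r; lra.
  lra.
have x1' : 1 <= x by lra.
have [c /andP[xc c1] E] := mvt_powR k 1 x ltr01 x1'.
have c0 : 1 <= c by lra.
have : c `^ (k - 1) <= 1.
  rewrite -[X in _ <= X](powRr0 c); apply: ler_powR; lra.
move: E; rewrite powR1 => E ck.
have : k * c `^ (k - 1) * (x - 1) <= k * (x - 1).
  rewrite -mulrA; apply: ler_wpM2l; first lra.
  rewrite -[X in _ <= X](mul1r (x - 1)); apply: ler_wpM2r; lra.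
lra.
Qed.

Lemma bern_ge (k x : R) : 1 <= k -> 0 <= x -> 1 + k * (x - 1) <= x `^ k.
Proof.
move=> k1; rewrite le_eqVlt => /predU1P[<-|x0].
  rewrite powR0; [lra|]; apply/eqP; lra.
have [x1|x1] := leP x 1.
  have [c /andP[xc c1] E] := mvt_powR k x 1 x0 x1.
  have c0 : 0 < c by lra.
  have : c `^ (k - 1) <= 1.
    rewrite -[X in _ <= X](powRr0 c); apply: ger_powR; [apply/andP; split; lra | lra].
  move: E; rewrite powR1 => E ck.
  have : k * c `^ (k - 1) * (1 - x) <= k * (1 - x).
    rewrite -mulrA; apply: ler_wpM2l; first lra.
    rewrite -[X in _ <= X](mul1r (1 - x)); apply: ler_wpM2r; lra.
  lra.
have x1' : 1 <= x by lra.
have [c /andP[xc c1] E] := mvt_powR k 1 x ltr01 x1'.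
have c0 : 1 <= c by lra.
have : 1 <= c `^ (k - 1).
  rewrite -[X in X <= _](powRr0 c); apply: ler_powR; lra.
move: E; rewrite powR1 => E ck.
have : k * (x - 1) <= k * c `^ (k - 1) * (x - 1).
  rewrite -mulrA; apply: ler_wpM2l; first lra.
  rewrite -[X in X <= _](mul1r (x - 1)); apply: ler_wpM2r; lra.
lra.
Qed.


Lemma powR_incr (s x y : R) : 0 <= s -> 0 <= x -> x <= y -> x `^ s <= y `^ s.
Proof.
move=> s0 x0 xy; have y0 : 0 <= y by lra.
by have := @ge0_ler_powR R s s0 x y; rewrite !nnegrE; apply.
Qed.

Lemma powR_decr (s x y : R) : s <= 0 -> 0 < x -> x <= y -> y `^ s <= x `^ s.
Proof.
move=> s0 x0 xy.
have y0 : 0 < y by lra.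
have : x `^ (- s) <= y `^ (- s) by apply: powR_incr; lra.
by rewrite !powRN lef_pV2 ?posrE ?powR_gt0.
Qed.

Lemma tan_ge (k c b : R) : 1 <= k -> 0 < c -> 0 <= b ->
  c `^ k + k * c `^ (k - 1) * (b - c) <= b `^ k.
Proof.
move=> k1 c0; rewrite le_eqVlt => /predU1P[<-|b0].
  rewrite powR0; last by apply/eqP; lra.
  have e : c * c `^ (k - 1) = c `^ k by apply: mulr_powRB1; lra.
  have := powR_ge0 c k; nra.
have [bc|cb] := leP b c.
  have [d /andP[bd dc] E] := mvt_powR k b c b0 bc.
  have : d `^ (k - 1) <= c `^ (k - 1).
    apply: powR_incr; lra.
  move=> h.
  have : k * d `^ (k - 1) * (c - b) <= k * c `^ (k - 1) * (c - b).
    apply: ler_wpM2r; first lra. apply: ler_wpM2l; lra.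
  lra.
have cb' : c <= b by lra.
have [d /andP[bd dc] E] := mvt_powR k c b c0 cb'.
have : c `^ (k - 1) <= d `^ (k - 1).
  apply: powR_incr; lra.
move=> h.
have : k * c `^ (k - 1) * (b - c) <= k * d `^ (k - 1) * (b - c).
  apply: ler_wpM2r; first lra. apply: ler_wpM2l; lra.
lra.
Qed.

Lemma tan_le (k c b : R) : 0 <= k <= 1 -> 0 < c -> 0 <= b ->
  b `^ k <= c `^ k + k * c `^ (k - 1) * (b - c).
Proof.
move=> /andP[k0 k1] c0; rewrite le_eqVlt => /predU1P[<-|b0].
  have [->|kn0] := eqVneq k 0.
    rewrite !powRr0; lra.
  rewrite powR0 //.
  have e : c * c `^ (k - 1) = c `^ k by apply: mulr_powRB1; lra.
  have := powR_ge0 c k; nra.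
have [bc|cb] := leP b c.
  have [d /andP[bd dc] E] := mvt_powR k b c b0 bc.
  have : c `^ (k - 1) <= d `^ (k - 1).
    apply: powR_decr; lra.
  move=> h.
  have : k * c `^ (k - 1) * (c - b) <= k * d `^ (k - 1) * (c - b).
    apply: ler_wpM2r; first lra. apply: ler_wpM2l; lra.
  lra.
have cb' : c <= b by lra.
have [d /andP[bd dc] E] := mvt_powR k c b c0 cb'.
have : d `^ (k - 1) <= c `^ (k - 1).
  apply: powR_decr; lra.
move=> h.
have : k * d `^ (k - 1) * (b - c) <= k * c `^ (k - 1) * (b - c).
  apply: ler_wpM2r; first lra. apply: ler_wpM2l; lra.
lra.
Qed.

Lemma midconv (p x y : R) : 1 <= p -> 0 <= x -> 0 <= y ->
  ((x + y) / 2) `^ p <= (x `^ p + y `^ p) / 2.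
Proof.
move=> p1 x0 y0.
have -> : (x + y) / 2 = 2^-1 * x + (1 - 2^-1) * y.
  have -> : 1 - 2^-1 = 2^-1 :> R by rewrite {1}(splitr 1) div1r addrK.
  ring.
have -> : (x `^ p + y `^ p) / 2 = 2^-1 * x `^ p + (1 - 2^-1) * y `^ p.
  have -> : 1 - 2^-1 = 2^-1 :> R by rewrite {1}(splitr 1) div1r addrK.
  ring.
by apply: (convex_powR p1 (Itv01 _ _)) => //=;
  rewrite ?inE/= ?in_itv/= ?invr_ge0// ?invf_le1 ?ler1n// andbT.
Qed.

Lemma is_derive_comp1 (f g : R -> R) (x df dg : R) :
  is_derive x 1 f df -> is_derive (f x) 1 g dg -> is_derive x 1 (g \o f) (dg * df).
Proof.
move=> hf hg.
have d1 : derivable f x 1 by case: hf.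
have d2 : derivable g (f x) 1 by case: hg.
apply: DeriveDef.
  apply/derivable1_diffP; apply: differentiable_comp; exact/derivable1_diffP.
by rewrite -derive1E derive1_comp // !derive1E !derive_val.
Qed.


Ltac dtac x0 := do ![apply: is_deriveB | apply: is_deriveD | apply: is_deriveM | exact: (@is_derive1_powR _ _ _ x0) | exact: is_derive_cst | exact: is_derive_id].

End S.


Section S.
Context {R : realType}.
Lemma keyA (a b k : R) : 0 < b -> b <= a -> 1 <= k ->
  a `^ (k + 1) - b `^ (k + 1) <= (k + 1) * (a - b) * ((a `^ k + b `^ k) / 2).
Proof.
move=> b0 ba k1.
have D : forall x : R, 0 < x -> is_derive x 1
   ((cst ((k + 1) / 2) * (@id R - cst b)) * (@powR R ^~ k + cst (b `^ k))
   - @powR R ^~ (k + 1))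
   ((k + 1) / 2 * (x `^ k + b `^ k)
   + (k + 1) / 2 * (x - b) * (k * x `^ (k - 1)) - (k + 1) * x `^ k).
  move=> x x0.
  have h1 := @is_derive1_powR R k x x0.
  have h2 := @is_derive1_powR R (k + 1) x x0.
  have h := is_deriveB (is_deriveM (is_deriveM (is_derive_cst ((k + 1) / 2) x 1)
     (is_deriveB (is_derive_id x 1) (is_derive_cst b x 1)))
     (is_deriveD h1 (is_derive_cst (b `^ k) x 1))) h2.
  have [d e] := h; split; first exact: d.
  rewrite e /GRing.scale/= !fctE /= addrK; ring.
have ab : b <= a := ba.
have D' : forall x : R, x \in `]b, a[ -> is_derive x 1
   ((cst ((k + 1) / 2) * (@id R - cst b)) * (@powR R ^~ k + cst (b `^ k))
   - @powR R ^~ (k + 1))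
   ((k + 1) / 2 * (x `^ k + b `^ k)
   + (k + 1) / 2 * (x - b) * (k * x `^ (k - 1)) - (k + 1) * x `^ k).
  move=> x; rewrite in_itv/= => /andP[bx _]; apply: D; lra.
have H : {in `[b, a], forall x : R, derivable
   ((cst ((k + 1) / 2) * (@id R - cst b)) * (@powR R ^~ k + cst (b `^ k))
   - @powR R ^~ (k + 1)) x 1}.
  move=> x; rewrite in_itv/= => /andP[bx _].
  have x0 : 0 < x by lra.
  by have [] := D x x0.
have [c] := MVT_segment ab D' (derivable_within_continuous H).
rewrite in_itv/= => /andP[bc ca].
rewrite !fctE /= => E.
have c0 : 0 < c by lra.
have t := tan_ge k c b k1 c0 (ltW b0).
have h1 : 0 <= (k + 1) / 2 * (b `^ k - c `^ k - k * c `^ (k - 1) * (b - c)).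
  apply: mulr_ge0; lra.
have h2 : 0 <= ((k + 1) / 2 * (c `^ k + b `^ k)
   + (k + 1) / 2 * (c - b) * (k * c `^ (k - 1)) - (k + 1) * c `^ k) * (a - b).
  apply: mulr_ge0; lra.
lra.
Qed.
Lemma keyB (a b k : R) : 0 < b -> b <= a -> 0 <= k <= 1 ->
  a `^ (k + 1) - b `^ (k + 1) <= (k + 1) * (a - b) * ((2^-1 * (a + b)) `^ k).
Proof.
move=> b0 ba k01.
have D : forall x : R, 0 < x -> is_derive x 1
   ((cst (k + 1) * (@id R - cst b)) * (@powR R ^~ k \o (cst 2^-1 * (@id R + cst b)))
   - @powR R ^~ (k + 1))
   ((k + 1) * (2^-1 * (x + b)) `^ k
   + (k + 1) * (x - b) * (k * (2^-1 * (x + b)) `^ (k - 1) * 2^-1) - (k + 1) * x `^ k).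
  move=> x x0.
  have hx : 0 < (cst 2^-1 * (@id R + cst b)) x by rewrite !fctE /=; lra.
  have h1 := @is_derive1_powR R k _ hx.
  have h2 := @is_derive1_powR R (k + 1) x x0.
  have hi := is_deriveM (is_derive_cst (2^-1 : R) x 1)
     (is_deriveD (is_derive_id x 1) (is_derive_cst b x 1)).
  have h := is_deriveB (is_deriveM (is_deriveM (is_derive_cst (k + 1) x 1)
     (is_deriveB (is_derive_id x 1) (is_derive_cst b x 1)))
     (is_derive_comp1 _ _ _ _ _ hi h1)) h2.
  have [d e] := h; split; first exact: d.
  rewrite e /GRing.scale/= !fctE /= addrK; ring.
have ab : b <= a := ba.
have D' : forall x : R, x \in `]b, a[ -> is_derive x 1
   ((cst (k + 1) * (@id R - cst b)) * (@powR R ^~ k \o (cst 2^-1 * (@id R + cst b)))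
   - @powR R ^~ (k + 1))
   ((k + 1) * (2^-1 * (x + b)) `^ k
   + (k + 1) * (x - b) * (k * (2^-1 * (x + b)) `^ (k - 1) * 2^-1) - (k + 1) * x `^ k).
  move=> x; rewrite in_itv/= => /andP[bx _]; apply: D; lra.
have H : {in `[b, a], forall x : R, derivable
   ((cst (k + 1) * (@id R - cst b)) * (@powR R ^~ k \o (cst 2^-1 * (@id R + cst b)))
   - @powR R ^~ (k + 1)) x 1}.
  move=> x; rewrite in_itv/= => /andP[bx _].
  have x0 : 0 < x by lra.
  by have [] := D x x0.
have [c] := MVT_segment ab D' (derivable_within_continuous H).
rewrite in_itv/= => /andP[bc ca].
rewrite !fctE /= => E.
have c0 : 0 < c by lra.
have m0 : 0 < 2^-1 * (c + b) by lra.
have t := tan_le k (2^-1 * (c + b)) c k01 m0 (ltW c0).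
have h1 : 0 <= (k + 1) * ((2^-1 * (c + b)) `^ k + k * (2^-1 * (c + b)) `^ (k - 1) * (c - 2^-1 * (c + b)) - c `^ k).
  apply: mulr_ge0; lra.
have h2 : 0 <= ((k + 1) * (2^-1 * (c + b)) `^ k
   + (k + 1) * (c - b) * (k * (2^-1 * (c + b)) `^ (k - 1) * 2^-1) - (k + 1) * c `^ k) * (a - b).
  apply: mulr_ge0; lra.
lra.
Qed.
End S.


Section S.
Context {R : realType}.

Lemma key (a b r q : R) : 0 <= b -> b <= a -> 1 <= r -> r <= q ->
  a `^ r - b `^ r <= r * (a - b) * ((a `^ q + b `^ q) / 2) `^ ((r - 1) / q).
Proof.
move=> b0 ba r1 rq.
have q0 : 0 < q by lra.
have q1 : 1 <= q by lra.
pose k := r - 1.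
have rE : r = k + 1 by rewrite /k; ring.
have k0 : 0 <= k by rewrite /k; lra.
pose e := k / q.
have e0 : 0 <= e by rewrite /e divr_ge0 //; lra.
have qe : q * e = k by rewrite /e mulrC -mulrA mulVf ?mulr1 //; lra.
rewrite -/k -/e.
pose Mq := (a `^ q + b `^ q) / 2.
have Mq0 : 0 <= Mq by rewrite /Mq; have := powR_ge0 a q; have := powR_ge0 b q; lra.
rewrite -/Mq.
suff [K [h1 h2]] : exists K, a `^ r - b `^ r <= r * (a - b) * K /\ K <= Mq `^ e.
  apply: (le_trans h1); apply: ler_wpM2l => //; apply: mulr_ge0; lra.
move: b0; rewrite le_eqVlt => /predU1P[b0|b0].
  move: ba; rewrite -b0 le_eqVlt => /predU1P[a0|a0].
    by exists (Mq `^ e); split => //; rewrite -a0 !subrr mulr0 mul0r.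
  exists (Mq `^ e); split => //.
  have rn0 : r != 0 by apply/eqP; lra.
  have qn0 : q != 0 by apply/eqP; lra.
  rewrite powR0 // subr0 subr0.
  have -> : Mq = a `^ q * 2^-1 by rewrite /Mq -b0 powR0 // addr0.
  rewrite powRM ?powR_ge0 ?invr_ge0 // -powRrM qe.
  rewrite -(powR_inv1 (ler0n _ 2)) -powRrM mulN1r powRN.
  set E := 2 `^ e.
  have E0 : 0 < E by rewrite /E powR_gt0.
  have e1 : e <= 1 by rewrite /e ler_pdivrMr // mul1r /k; lra.
  have ek : e <= k.
    rewrite /e ler_pdivrMr //; nra.
  have Eb : E <= 1 + e * (2 - 1).
    by apply: bern_le; [apply/andP; split; lra | lra].
  have rE1 : 1 <= r / E by rewrite ler_pdivlMr // mul1r; lra.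
  have ar : a * a `^ k = a `^ r by rewrite /k; apply: mulr_powRB1; lra.
  have h : 0 <= a * a `^ k * (r / E - 1).
    apply: mulr_ge0; [apply: mulr_ge0; [lra|apply: powR_ge0]|lra].
  rewrite -ar; lra.
have [k1|k1] := leP k 1.
  exists ((2^-1 * (a + b)) `^ k); split.
    by rewrite rE; apply: keyB => //; apply/andP; split.
  have m0 : 0 <= 2^-1 * (a + b) by lra.
  have hm : (2^-1 * (a + b)) `^ q <= Mq.
    rewrite /Mq mulrC; apply: midconv; lra.
  rewrite -qe powRrM; apply: powR_incr => //; apply: powR_ge0.
exists ((a `^ k + b `^ k) / 2); split.
  by rewrite rE; apply: keyA => //; lra.
pose j := q / k.
have kn0 : k != 0 by apply/eqP; lra.
have j1 : 1 <= j by rewrite /j ler_pdivlMr ?mul1r /k; lra.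
have kj : k * j = q by rewrite /j mulrC -mulrA mulVf ?mulr1.
have qn0 : q != 0 by apply/eqP; lra.
have je : j * e = 1.
  rewrite /j /e; field; do ?[apply/andP; split]; by [].
have K0 : 0 <= (a `^ k + b `^ k) / 2.
  have := powR_ge0 a k; have := powR_ge0 b k; lra.
have hm : ((a `^ k + b `^ k) / 2) `^ j <= Mq.
  have := midconv j (a `^ k) (b `^ k) j1 (powR_ge0 _ _) (powR_ge0 _ _).
  by rewrite -!powRrM kj.
have -> : (a `^ k + b `^ k) / 2 = (((a `^ k + b `^ k) / 2) `^ j) `^ e.
  by rewrite -powRrM je powRr1.
apply: powR_incr; [exact: e0 | exact: powR_ge0 | exact: hm].
Qed.
End S.


Section S.
Context {R : realType}.

Lemma pw (u v p q : R) : 1 <= p -> p < q ->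
  (`| `|u| `^ (q / p) - `|v| `^ (q / p) |) `^ p <=
  (q / p) `^ p * `|u - v| `^ p * ((`|u| `^ q + `|v| `^ q) / 2) `^ ((q - p) / q).
Proof.
move=> p1 pq.
have p0 : 0 < p by lra.
have q0 : 0 < q by lra.
have r1 : 1 <= q / p by rewrite ler_pdivlMr // mul1r; lra.
have rq : q / p <= q by rewrite ler_pdivrMr //; nra.
wlog vu : u v / `|v| <= `|u|.
  move=> W; have [vu|uv] := leP `|v| `|u|; first exact: W.
  have := W v u (ltW uv).
  by rewrite [X in X `^ p <= _]distrC [`|v - u|]distrC [`|v| `^ q + _]addrC.
have K := key `|u| `|v| (q / p) q (normr_ge0 v) vu r1 rq.
have d : `|u| - `|v| <= `|u - v| by exact: lerB_dist.
set M := (`|u| `^ q + `|v| `^ q) / 2 in K *.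
have M0 : 0 <= M by rewrite /M; have := powR_ge0 `|u| q; have := powR_ge0 `|v| q; lra.
have hge : 0 <= `|u| `^ (q / p) - `|v| `^ (q / p).
  rewrite subr_ge0; apply: powR_incr => //; lra.
rewrite ger0_norm //.
have K2 : `|u| `^ (q / p) - `|v| `^ (q / p) <= q / p * `|u - v| * M `^ ((q / p - 1) / q).
  apply: (le_trans K); apply: ler_wpM2r; first exact: powR_ge0.
  apply: ler_wpM2l; lra.
have := powR_incr p _ _ (ltW p0) hge K2.
have ee : (q / p - 1) / q * p = (q - p) / q.
  field; apply/andP; split; apply/eqP; lra.
rewrite powRM ?powR_ge0 //; last by apply: mulr_ge0; [lra|].
by rewrite powRM //; [rewrite -powRrM ee|lra].
Qed.

End S.


Section E.
Context {R : realType} {T : choiceType}.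
Local Open Scope ereal_scope.

Lemma esumZ (c : R) (f : T -> \bar R) : (0 <= c)%R -> (forall x, 0 <= f x) ->
  \esum_(i in [set: T]) (c%:E * f i) = c%:E * \esum_(i in [set: T]) f i.
Proof.
move=> c0 f0; rewrite /esum.
have -> : [set \sum_(x \in A) (c%:E * f x) | A in fsets [set: T]] =
   [set c%:E * y | y in [set \sum_(x \in A) f x | A in fsets [set: T]]].
  rewrite image_comp; apply: eq_imagel => A _ /=.
  by rewrite ge0_mule_fsumr.
move: c0; rewrite le_eqVlt => /predU1P[<-|c0]; last exact: ereal_sup_pZl.
rewrite mul0e; under eq_imagel do rewrite mul0e.
rewrite ereal_sup_cst //; apply/set0P; exists (\sum_(x \in set0) f x).
by exists set0 => //; split.
Qed.

Lemma esum_term (f : T -> \bar R) z : (forall x, 0 <= f x) ->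
  f z <= \esum_(i in [set: T]) f i.
Proof.
move=> f0; apply: esum_ge; exists [set z].
  by split; [exact: finite_set1|].
by rewrite fsbig_set1.
Qed.

End E.


Section Y.
Context {R : realType}.
Lemma young_id (n p q : R) : 0 < n -> 0 < p -> p < q ->
  (n `^ (- (p / q * ((q - p) / q)))) `^ (q / p) / (q / p) * n
  + ((n `^ (- (p / q * ((q - p) / q))))^-1) `^ (q / (q - p)) / (q / (q - p))
  = n `^ (p / q).
Proof.
move=> n0 p0 pq.
have q0 : 0 < q by lra.
have qp0 : 0 < q - p by lra.
have e1 : (n `^ (- (p / q * ((q - p) / q)))) `^ (q / p) = n `^ (- ((q - p) / q)).
  rewrite -powRrM; congr (n `^ _); field; apply/andP; split; apply/eqP; lra.
have e3 : ((n `^ (- (p / q * ((q - p) / q))))^-1) `^ (q / (q - p)) = n `^ (p / q).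
  rewrite powRN invrK -powRrM; congr (n `^ _); field; apply/andP; split; apply/eqP; lra.
have e4 : n `^ (- ((q - p) / q)) * n = n `^ (p / q).
  rewrite -{2}(powRr1 (ltW n0)) -powRD; last by apply/implyP => _; rewrite gt_eqF.
  congr (n `^ _); field; apply/eqP; lra.
rewrite e1 e3 mulrAC e4.
field; do ?[apply/andP; split]; apply/eqP; lra.
Qed.
End Y.

Ltac efin := do ?[rewrite -EFinM | rewrite -EFinD].
Ltac pge := repeat (first [ assumption | apply: addr_ge0 | apply: mulr_ge0 | apply: powR_ge0 ]).
Ltac e0 := apply: (@le_trans _ _ (0%:E)); first exact: lexx.

Section MZ.
Context {R : realType} {T : choiceType}.
Local Open Scope ereal_scope.

Lemma mazur (u v : T -> R) (p q : R) : (1 <= p)%R -> (p < q)%R ->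
  lpsum q u = 1 -> lpsum q v = 1 ->
  lpnorm p (fun z => `|u z| `^ (q / p) - `|v z| `^ (q / p))%R
    <= (q / p)%:E * lpnorm q (fun z => u z - v z)%R.
Proof.
move=> p1 pq hu hv.
have p0 : (0 < p)%R by lra.
have q0 : (0 < q)%R by lra.
have r0 : (0 < q / p)%R by rewrite divr_gt0.
rewrite /lpnorm.
have N0 : 0 <= lpsum q (fun z => u z - v z)%R.
  by apply: esum_ge0 => z _; rewrite lee_fin powR_ge0.
move: N0; case E: (lpsum q _) => [n| |] // N0; last first.
  rewrite poweRyr ?gt_eqF ?invr_gt0 // gt0_muley ?leey //.
rewrite lee_fin in N0.
suff H : lpsum p (fun z => `|u z| `^ (q / p) - `|v z| `^ (q / p))%R
    <= ((q / p) `^ p * n `^ (p / q))%:E.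
  have hp : (0 <= p^-1)%R by rewrite invr_ge0 ltW.
  have L0 : 0 <= lpsum p (fun z => `|u z| `^ (q / p) - `|v z| `^ (q / p))%R.
    by apply: esum_ge0 => z _; rewrite lee_fin powR_ge0.
  have := @gt0_ler_poweR R p^-1 hp _ _ _ _ H.
  rewrite !in_itv /= !leey L0 lee_fin mulr_ge0 ?powR_ge0 //.
  move=> /(_ isT isT) /le_trans; apply.
  rewrite -EFinM lee_fin powRM ?powR_ge0 // -!powRrM.
  rewrite mulfV ?gt_eqF // (powRr1 (ltW r0)).
  have -> : (p / q * p^-1 = q^-1)%R by field; apply/andP; split; apply/eqP; lra.
  by [].

have G0 z : (0 <= `|(`|u z| `^ (q / p) - `|v z| `^ (q / p))| `^ p)%R := powR_ge0 _ _.
move: E hu hv; rewrite /lpsum => E hu hv.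
move: N0; rewrite le_eqVlt => /predU1P[n0|n0].
  have z0 z : u z = v z.
    have := esum_term (fun z => (`|u z - v z| `^ q)%:E) z (fun x => ltac:(by rewrite lee_fin powR_ge0)).
    rewrite /= E -n0 lee_fin => h.
    have : (`|u z - v z| `^ q = 0)%R by apply/le_anti; rewrite h powR_ge0.
    by move/powR_eq0_eq0/normr0_eq0/eqP; rewrite subr_eq0 => /eqP.
  rewrite esum1; first by rewrite lee_fin mulr_ge0 ?powR_ge0.
  by move=> z _; rewrite z0 subrr normr0 powR0 ?gt_eqF.
pose lam := (n `^ (- (p / q * ((q - p) / q))))%R.
pose al := (lam `^ (q / p) / (q / p))%R.
pose be := ((lam^-1) `^ (q / (q - p)) / (q / (q - p)))%R.
have lam0 : (0 < lam)%R by rewrite /lam powR_gt0.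
have qp0 : (0 < q - p)%R by lra.
have al0 : (0 <= al)%R by rewrite /al divr_ge0 ?powR_ge0 // ltW.
have be0 : (0 <= be)%R by rewrite /be divr_ge0 ?powR_ge0 // ltW // divr_gt0.
have pt z : (`|(`|u z| `^ (q / p) - `|v z| `^ (q / p))| `^ p <=
    (q / p) `^ p * (al * `|u z - v z| `^ q
       + be * (2^-1 * (`|u z| `^ q + `|v z| `^ q))))%R.
  apply: (le_trans (pw (u z) (v z) p q p1 pq)).
  rewrite -mulrA; apply: ler_wpM2l; first exact: powR_ge0.
  set F := (`|u z - v z| `^ p)%R.
  set M := ((`|u z| `^ q + `|v z| `^ q) / 2)%R.
  have M0 : (0 <= M)%R.
    by rewrite /M divr_ge0 // addr_ge0 ?powR_ge0.
  set G := (M `^ ((q - p) / q))%R.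
  have -> : (F * G = (lam * F) * (G * lam^-1))%R.
    by field; apply/eqP; lra.
  apply: (le_trans (conjugate_powR (p := (q / p)%R) (q := (q / (q - p))%R) _ _ _ _ _)).
  - by apply: mulr_ge0; [lra|apply: powR_ge0].
  - by apply: mulr_ge0; [apply: powR_ge0|rewrite invr_ge0; lra].
  - exact: r0.
  - exact: divr_gt0.
  - by rewrite !invf_div; field; apply/eqP; lra.
  rewrite powRM; [|lra|apply: powR_ge0].
  rewrite powRM; [|apply: powR_ge0|rewrite invr_ge0; lra].
  rewrite /F /G -!powRrM.
  have -> : (p * (q / p) = q)%R by field; apply/eqP; lra.
  have -> : ((q - p) / q * (q / (q - p)) = 1)%R.
    by field; apply/andP; split; apply/eqP; lra.
  rewrite powRr1 // /M /al /be /lam -powRrM.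
  rewrite le_eqVlt; apply/orP; left; apply/eqP; ring.

have pos (f : T -> \bar R) : (forall z, 0 <= f z) -> forall z, [set: T] z -> 0 <= f z.
  by move=> h z _.
have h2 : (0 <= 2^-1 :> R)%R by rewrite invr_ge0.
apply: (le_trans (le_esum (b := fun z => ((q / p) `^ p)%:E * (al%:E * (`|u z - v z| `^ q)%:E
   + be%:E * ((2^-1)%:E * ((`|u z| `^ q)%:E + (`|v z| `^ q)%:E)))) _)).
  by move=> z _; efin; rewrite lee_fin; exact: pt.
rewrite esumZ; try done; try exact: powR_ge0; try (by move=> z; efin; e0; rewrite lee_fin; pge).
rewrite esumD; try (by move=> z _; efin; e0; rewrite lee_fin; pge).
rewrite esumZ; try done; try exact: powR_ge0; try (by move=> z; efin; e0; rewrite lee_fin; pge).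
rewrite esumZ; try done; try exact: powR_ge0; try (by move=> z; efin; e0; rewrite lee_fin; pge).
rewrite esumZ; try done; try exact: powR_ge0; try (by move=> z; efin; e0; rewrite lee_fin; pge).
rewrite esumD; try (by move=> z _; efin; e0; rewrite lee_fin; pge).
rewrite E hu hv; efin; rewrite lee_fin.
have -> : (2^-1 * (1 + 1) = 1 :> R)%R by field.
rewrite mulr1 /al /be /lam (young_id n p q n0 p0 pq).
by [].
Qed.
End MZ.


Section F.
Context {R : realType} {X : choiceType}.
Local Open Scope ereal_scope.

Lemma sphere_sum (q : R) (f : X -> R) : (0 < q)%R -> in_lp_sphere q f -> lpsum q f = 1.
Proof.
move=> q0 [_]; rewrite /lpnorm.
have L0 : 0 <= lpsum q f by apply: esum_ge0 => z _; rewrite lee_fin powR_ge0.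
move: L0; case: (lpsum q f) => [e| |] // e0.
  rewrite poweR_EFin => /eqP; rewrite eqe => /eqP h.
  rewrite lee_fin in e0.
  have : (e = (e `^ q^-1) `^ q)%R by rewrite -powRrM mulVf ?gt_eqF // powRr1.
  by rewrite h powR1 => ->.
by rewrite poweRyr // invr_eq0 gt_eqF.
Qed.

Lemma sphere_eta (p q : R) (f : X -> R) : (0 < p)%R -> (0 < q)%R -> in_lp_sphere q f ->
  in_lp_sphere p (fun z => `|f z| `^ (q / p))%R.
Proof.
move=> p0 q0 hf.
have h := sphere_sum q f q0 hf.
have e : lpsum p (fun z => `|f z| `^ (q / p))%R = 1.
  rewrite -h /lpsum; apply: eq_esum => z _.
  by rewrite ger0_norm ?powR_ge0 // -powRrM divfK ?gt_eqF.
by split; rewrite /in_lp ?/lpnorm e ?ltry ?poweR1r.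
Qed.


Lemma support_eta (d : X -> X -> R) (xi : X -> X -> R) (r : R) : (0 < r)%R ->
  support_radius d (fun x z => `|xi x z| `^ r)%R = support_radius d xi.
Proof.
move=> r0; rewrite /support_radius; congr ereal_sup.
apply/seteqP; split => t [x [y [h ->]]]; exists x, y; split => //.
  by move: h; rewrite powR_eq0 negb_and normr_eq0 => /orP[//|]; rewrite (gt_eqF r0).
by rewrite powR_eq0 negb_and normr_eq0 h.
Qed.

Lemma eps_eta (d : X -> X -> R) (hd : is_metric d) (xi : X -> X -> R) (p q : R) :
  (1 <= p)%R -> (p < q)%R -> (forall x, in_lp_sphere q (xi x)) ->
  eps_xi d p (fun x z => `|xi x z| `^ (q / p))%R <= (q / p)%:E * eps_xi d q xi.
Proof.
move=> p1 pq hxi.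
have p0 : (0 < p)%R by lra.
have q0 : (0 < q)%R by lra.
have r0 : (0 <= q / p)%R by rewrite divr_ge0 // ltW.
have S0 : 0 <= eps_xi d q xi by apply: ereal_sup_ubound; left.
apply: ge_ereal_sup => y [->|[x [y' [hxy ->]]]].
  by apply: mule_ge0 => //; rewrite lee_fin.
case: hd => d0 _ _ _.
have di : (0 <= (d x y')^-1)%R by rewrite invr_ge0.
have := mazur (xi x) (xi y') p q p1 pq (sphere_sum _ _ q0 (hxi x)) (sphere_sum _ _ q0 (hxi y')).
move=> /(lee_wpmul2r (x := ((d x y')^-1)%:E)); rewrite lee_fin => /(_ di) /le_trans; apply.
rewrite -muleA; apply: lee_wpmul2l; first by rewrite lee_fin.
by apply: ereal_sup_ubound; right; exists x, y'.
Qed.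

End F.

Theorem corollary2p3p1 (R : realType) (X : choiceType) (d : X -> X -> R)
  (hd : is_metric d) (p q : R) (hp : 1 <= p) (hpq : p <= q) (S : R) (hS : 0 < S) :
  (profile d p S <= (q / p)%:E * profile d q S)%E.
Proof.
have p0 : (0 < p)%R by lra.
have q0 : (0 < q)%R by lra.
move: hpq; rewrite le_eqVlt => /predU1P[<-|pq].
  by rewrite divff ?gt_eqF // mul1e.
have r0 : (0 < q / p)%R by rewrite divr_gt0.
rewrite /profile -ereal_inf_pZl //.
apply: le_ereal_inf_tmp => _ [_ [xi [hxi hS'] <-] <-].
apply: (@le_trans _ _ (eps_xi d p (fun x z => `|xi x z| `^ (q / p))%R)).
  apply: ereal_inf_lbound; exists (fun x z => `|xi x z| `^ (q / p))%R => //.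
  split; first by move=> x; apply: sphere_eta.
  by rewrite support_eta.
exact: eps_eta.
Qed.
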